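(* Let $F$ and $p$ be positive integers and let $a$ be the smallest positive integer that does not divide $F$. Then $\mathrm{Sat}(F)$ contains at least one element of $\mathrm{Sat}(F)$-rank equal to $p$ if and only if $a(2^p-1)<F$.
   Context: A numerical semigroup is a subset $S\subseteq\mathbb{N}$ closed under addition, containing $0$, with $\mathbb{N}\setminus S$ finite; its Frobenius number $\mathrm{F}(S)$ is the largest integer not in $S$. For $A\subseteq\mathbb{N}$ and $a\in A$, let $\mathrm{d}_A(a)=\gcd\{x\in A\mid x\le a\}$. A numerical semigroup $S$ is saturated if $s+\mathrm{d}_S(s)\in S$ for all $s\in S\setminus\{0\}$. For a positive integer $F$, $\mathrm{Sat}(F)$ denotes the set of all saturated numerical semigroups $S$ with $\mathrm{F}(S)=F$. Let $\Delta(F+1)=\{0\}\cup\{x\in\mathbb{N}\mid x\ge F+1\}$. A set $X\subseteq\mathbb{N}$ is a $\mathrm{Sat}(F)$-set if $X\cap\Delta(F+1)=\emptyset$ and there exists $S\in\mathrm{Sat}(F)$ with $X\subseteq S$. For a $\mathrm{Sat}(F)$-set $X$, $\mathrm{Sat}(F)[X]$ denotes the intersection of all elements of $\mathrm{Sat}(F)$ containing $X$ (the smallest element of $\mathrm{Sat}(F)$ containing $X$). If $S=\mathrm{Sat}(F)[X]$, $X$ is a $\mathrm{Sat}(F)$-system of generators of $S$; it is minimal if $S\neq\mathrm{Sat}(F)[Y]$ for every proper subset $Y\subsetneq X$. Every $S\in\mathrm{Sat}(F)$ has a unique minimal $\mathrm{Sat}(F)$-system of generators, and its cardinality is the $\mathrm{Sat}(F)$-rank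 of $S$. *)

(* Defs.v *)
From mathcomp Require Import all_boot.
Set Implicit Arguments. Unset Strict Implicit. Unset Printing Implicit Defensive.

Definition numerical_semigroup (S : pred nat) : Prop :=
  S 0 /\ (forall x y, S x -> S y -> S (x + y)) /\
  (exists N, forall x, N <= x -> S x).

Definition frobenius_is (S : pred nat) (F : nat) : Prop :=
  ~~ S F /\ (forall x, F < x -> S x).

Definition dA (A : pred nat) (a : nat) : nat :=
  \big[gcdn/0]_(0 <= x < a.+1 | A x) x.

Definition saturated (S : pred nat) : Prop :=
  forall s, S s -> s != 0 -> S (s + dA S s).

Definition inSat (F : nat) (S : pred nat) : Prop :=
  numerical_semigroup S /\ saturated S /\ frobenius_is S F.

Definition subset_nat (X Y : pred nat) : Prop := forall x, X x -> Y x.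

Definition SatF_set (F : nat) (X : pred nat) : Prop :=
  (forall x, X x -> 0 < x <= F) /\ exists S, inSat F S /\ subset_nat X S.

Definition SatF_generated (F : nat) (X S : pred nat) : Prop :=
  forall x, S x <-> (forall T, inSat F T -> subset_nat X T -> T x).

Definition SatF_system (F : nat) (S X : pred nat) : Prop :=
  SatF_set F X /\ SatF_generated F X S.

Definition SatF_minimal_system (F : nat) (S X : pred nat) : Prop :=
  SatF_system F S X /\
  forall Y : pred nat, subset_nat Y X -> (exists x, X x /\ ~~ Y x) ->
    ~ SatF_generated F Y S.

(* cardinality of a Sat(F)-set (it is contained in {1,...,F}) *)
Definition card_SatF_set (F : nat) (X : pred nat) : nat := count X (iota 1 F).

Definition SatF_rank_is (F : nat) (S : pred nat) (p : nat) : Prop :=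
  exists X, SatF_minimal_system F S X /\ card_SatF_set F X = p.

(* Main.v *)
Require Import Defs.
From mathcomp Require Import all_boot.
From mathcomp Require Import zify.
From Stdlib Require Import ClassicalEpsilon.
Set Implicit Arguments. Unset Strict Implicit.


Lemma dA_dvd (T : pred nat) u x : T x -> x <= u -> dA T u %| x.
Proof.
move=> Tx xu; rewrite /dA big_mkord.
have xlt : x < u.+1 by [].
exact: (@biggcdn_inf _ (Ordinal xlt) (fun i : 'I_u.+1 => T (0 + i)) (fun i => 0 + i)).
Qed.

Lemma dvd_dA (T : pred nat) u d : (forall x, T x -> x <= u -> d %| x) -> d %| dA T u.
Proof.
move=> H; rewrite /dA big_seq_cond; apply: (big_ind (fun g => d %| g)) => //.
- by move=> x y hx hy; rewrite dvdn_gcd hx hy.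
- move=> i /andP [iu Ti]; apply: H => //; rewrite mem_index_iota in iu; lia.
Qed.

Lemma dA_pos (T : pred nat) u : T u -> 0 < u -> 0 < dA T u.
Proof.
move=> Tu u0; have := dA_dvd Tu (leqnn u).
case: (dA T u) => // ; rewrite dvd0n => /eqP u00; lia.
Qed.

Lemma sat_step (T : pred nat) : saturated T -> forall n u v, v - u <= n ->
  T u -> 0 < u -> u <= v -> dA T u %| v - u -> T v.
Proof.
move=> Hs; elim=> [|n IH] u v Hn Tu u0 uv Hd.
  by have -> : v = u by lia.
case: (eqVneq v u) => [-> //|vu].
have dpos := dA_pos Tu u0.
have Hle : dA T u <= v - u by apply: dvdn_leq => //; lia.
have Tu' : T (u + dA T u) by apply: Hs => //; lia.
apply: (IH (u + dA T u)) => //; try lia.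
have Hm : dA T (u + dA T u) %| dA T u.
  apply: dvd_dA => x Tx xu; apply: dA_dvd => //; lia.
have -> : v - (u + dA T u) = (v - u) - dA T u by lia.
apply: dvdn_sub; last by [].
exact: dvdn_trans Hm Hd.
Qed.

Lemma sat_stepL (T : pred nat) u v : saturated T ->
  T u -> 0 < u -> u <= v -> dA T u %| v - u -> T v.
Proof. move=> Hs; exact: (sat_step Hs (leqnn (v - u))). Qed.

Definition gseq (s : seq nat) := foldr gcdn 0 s.

Lemma gseq_dvd s x : x \in s -> gseq s %| x.
Proof.
elim: s => //= h s IH; rewrite in_cons => /orP [/eqP ->|xs].
  exact: dvdn_gcdl.
exact: dvdn_trans (dvdn_gcdr _ _) (IH xs).
Qed.

Lemma dvd_gseq s d : {in s, forall x, d %| x} -> d %| gseq s.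
Proof.
elim: s => //= h s IH H; rewrite dvdn_gcd H ?mem_head //=.
by apply: IH => x xs; apply: H; rewrite in_cons xs orbT.
Qed.

Lemma proper_div d n : d %| n -> d != n -> 0 < n -> 2 * d <= n.
Proof.
move=> /dvdnP [k ->] ne pos.
have : k != 1 by apply: contra ne => /eqP ->; rewrite mul1n.
have : 0 < k by move: pos; rewrite muln_gt0 => /andP [].
nia.
Qed.

Lemma dvd_gap g w x : g %| w -> g %| x -> w < x -> w + g <= x.
Proof.
move=> /dvdnP [k1 ->] /dvdnP [k2 ->] lt.
have : k1 < k2.
  case: (ltnP k1 k2) => // h; have : k2 * g <= k1 * g by apply: leq_mul.
  lia.
nia.
Qed.

Lemma arith_eq g E : 0 < E -> g * (2 * E - 1) = 2 * g * (E - 1) + g.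
Proof.
case: E => // e _; have -> : 2 * e.+1 - 1 = (2 * e).+1 by lia.
by rewrite subn1 /= mulnS mulnA (mulnC g 2) addnC.
Qed.

Lemma chain s : pairwise ltn s -> all (fun x => 0 < x) s ->
  (forall t y r, s = t ++ y :: r -> t != [::] -> ~~ (gseq t %| y)) ->
  gseq s * (2 ^ size s - 1) <= last 0 s.
Proof.
elim/last_ind: s => [|t x IH] //.
rewrite -cats1 pairwise_cat all_cat => /and3P [Hrel Hpt _] /andP [Hpos Hx] HP.
rewrite cats1 last_rcons size_rcons.
case/lastP: t IH Hrel Hpt Hpos HP => [|t' w] IH Hrel Hpt Hpos HP.
  by rewrite /= gcdn0 muln1.
have IH' := IH Hpt Hpos.
have HP' : forall t y r, rcons t' w = t ++ y :: r -> t != [::] -> ~~ (gseq t %| y).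
  move=> t y r E ne; apply: (HP t y (rcons r x)) => //.
  by rewrite E -cats1 -catA.
move: (IH' HP'); rewrite last_rcons => IHw.
set G := gseq (rcons t' w) in IHw *.
set g := gseq (rcons (rcons t' w) x).
have wt : w \in rcons t' w by rewrite mem_rcons mem_head.
have gG : g %| G.
  apply: dvd_gseq => e es; apply: gseq_dvd; rewrite mem_rcons in_cons es orbT //.
have gx : g %| x by apply: gseq_dvd; rewrite mem_rcons mem_head.
have gw : g %| w by apply: gseq_dvd; rewrite mem_rcons in_cons wt orbT.
have nGx : ~~ (G %| x) by apply: (HP _ x [::]) => //; case: (t').
have wpos : 0 < w by move/allP: Hpos => /(_ w wt).
have wx : w < x by move/allrelP: Hrel => /(_ w x wt (mem_head _ _)).
have Gw : G %| w by apply: gseq_dvd.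
have Gpos : 0 < G by case: (G) Gw => //; rewrite dvd0n => /eqP; lia.
have gne : g != G by apply: contra nGx => /eqP <-.
have h2 := proper_div gG gne Gpos.
have h3 := dvd_gap gw gx wx.
rewrite expnS.
have E1 : 0 < 2 ^ size (rcons t' w) by rewrite expn_gt0.
set E := 2 ^ size (rcons t' w) in IHw E1 *.
have h4 : 2 * g * (E - 1) <= G * (E - 1) by apply: leq_mul.
rewrite (arith_eq g E1).
exact: leq_trans (leq_add (leq_trans h4 IHw) (leqnn g)) h3.
Qed.

Definition Tdc (a F D c : nat) : pred nat :=
  fun z => (D %| z) || ((a %| z) && (c < z)) || (F < z).

Lemma Tdc_inSat a F D c : a %| D -> ~~ (a %| F) -> inSat F (Tdc a F D c).
Proof.
move=> aD naF.
have aT : forall z, Tdc a F D c z -> z <= F -> a %| z.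
  move=> z /orP [/orP [h|/andP [h _]]|h] zF //; first exact: dvdn_trans aD h.
  lia.
split; [split; [|split]|split].
- by rewrite /Tdc dvdn0.
- move=> x y; rewrite /Tdc.
  case: (ltnP F x) => hx; first by rewrite !orbT; move=> _ _; apply/orP; right; lia.
  case: (ltnP F y) => hy; first by move=> _ _; apply/orP; right; lia.
  rewrite !orbF => /orP [hx1|/andP [hx1 hx2]] /orP [hy1|/andP [hy1 hy2]].
  + by rewrite (dvdn_add hx1 hy1).
  + apply/orP; left; apply/orP; right; apply/andP; split; last by lia.
    by rewrite dvdn_add // (dvdn_trans aD hx1).
  + apply/orP; left; apply/orP; right; apply/andP; split; last by lia.
    by rewrite dvdn_add // (dvdn_trans aD hy1).
  + apply/orP; left; apply/orP; right; apply/andP; split; last by lia.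
    by rewrite dvdn_add.
- by exists F.+1 => x hx; rewrite /Tdc; apply/orP; right; lia.
- move=> s Ts s0; rewrite /Tdc.
  case: (ltnP F s) => hs; first by apply/orP; right; lia.
  case: (leqP s c) => hc.
  + have Ds : D %| s.
      by move: Ts; rewrite /Tdc => /orP [/orP [h|/andP [_ h]]|h] //; lia.
    have Dd : D %| dA (Tdc a F D c) s.
      apply: dvd_dA => z /orP [/orP [h|/andP [_ h]]|h] zs //; lia.
    by rewrite (dvdn_add Ds Dd).
  + have as_ : a %| s by exact: aT.
    have ad : a %| dA (Tdc a F D c) s.
      apply: dvd_dA => z Tz zs; apply: aT => //; lia.
    apply/orP; left; apply/orP; right; rewrite (dvdn_add as_ ad) /=; lia.
- split.
  + rewrite /Tdc ltnn orbF; apply/negP => /orP [h|/andP [h _]].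
      by move: naF; rewrite (dvdn_trans aD h).
    by move: naF; rewrite h.
  + by move=> x hx; rewrite /Tdc; apply/orP; right.
Qed.

Definition satgen (F : nat) (X : pred nat) : pred nat :=
  fun z => if excluded_middle_informative
      (forall T, inSat F T -> subset_nat X T -> T z) then true else false.

Lemma satgenP F X z : satgen F X z <-> (forall T, inSat F T -> subset_nat X T -> T z).
Proof.
rewrite /satgen; case: excluded_middle_informative => h; split => //.
Qed.

Lemma satgen_inSat F X T0 : inSat F T0 -> subset_nat X T0 -> inSat F (satgen F X).
Proof.
move=> HT0 XT0.
split; [split; [|split]|split].
- by apply/satgenP => T [[h _] _] _.
- move=> x y /satgenP hx /satgenP hy; apply/satgenP => T HT XT.
  by case: (HT) => [[_ [h _]] _]; apply: h; [apply: hx | apply: hy].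
- exists F.+1 => x hx; apply/satgenP => T [_ [_ [_ h]]] _; apply: h; lia.
- move=> s /satgenP Hs s0; apply/satgenP => T HT XT.
  have Ts : T s by apply: Hs.
  case: (HT) => _ [Hsat _].
  apply: (sat_stepL Hsat Ts); first by lia.
  + by rewrite leq_addr.
  + rewrite addKn; apply: dvd_dA => z /satgenP Sz zs; apply: dA_dvd => //.
    by apply: Sz.
- split.
  + apply/negP => /satgenP h; case: (HT0) => _ [_ [h0 _]].
    by move: h0; rewrite (h T0 HT0 XT0).
  + move=> x hx; apply/satgenP => T [_ [_ [_ h]]] _; exact: h.
Qed.

Lemma pw_last s e : pairwise ltn s -> e \in s -> e <= last 0 s.
Proof.
case/lastP: s => // s' x; rewrite -cats1 pairwise_cat mem_cat last_cat /=.
move=> /and3P [H _ _] /orP [es|]; last by rewrite in_cons orbF => /eqP ->.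
by move/allrelP: H => /(_ e x es (mem_head _ _)) /ltnW.
Qed.

Lemma pw_cat_lt t y r e : pairwise ltn (t ++ y :: r) -> e \in t -> e < y.
Proof.
rewrite pairwise_cat => /and3P [H _ _] et.
by move/allrelP: H => /(_ e y et (mem_head _ _)).
Qed.

Lemma D_dvd a p i j : 0 < i -> i < j -> j <= p ->
  a * 2 ^ (p - j).+1 %| a * (2 ^ p - 2 ^ (p - i)).
Proof.
move=> i0 ij jp; apply: dvdn_mul (dvdnn a) _.
by apply: dvdn_sub; apply: dvdn_exp2l; lia.
Qed.

Lemma D_ndvd a p j : 0 < a -> 0 < j -> j <= p ->
  ~~ (a * 2 ^ (p - j).+1 %| a * (2 ^ p - 2 ^ (p - j))).
Proof.
move=> a0 j0 jp.
have [q ->] : exists q, p = q + j by exists (p - j); lia.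
have -> : q + j - j = q by lia.
rewrite expnD -{2}(muln1 (2 ^ q)) -mulnBr expnS.
have -> : a * (2 * 2 ^ q) = (a * 2 ^ q) * 2 by rewrite mulnCA mulnC.
rewrite mulnA dvdn_pmul2l; last by rewrite muln_gt0 a0 expn_gt0.
rewrite dvdn2 oddB; last by rewrite expn_gt0.
by move: j0; rewrite oddX /=; case: (j).
Qed.

Lemma sub_lt A B C : C < B -> B <= A -> A - B < A - C.
Proof. lia. Qed.

Unset Implicit Arguments.

Theorem corollary52 (F p a : nat) :
  0 < F -> 0 < p ->
  0 < a -> ~~ (a %| F) -> (forall b, 0 < b < a -> b %| F) ->
  ((exists S : pred nat, inSat F S /\ SatF_rank_is F S p) <->
   a * (2 ^ p - 1) < F).
Proof.
move=> F0 p0 a0 naF Hb; split.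
- case=> S [HS [X [[[[HXb _] HXgen] Hmin] Hcard]]].
  have XS : forall x, X x -> S x by move=> x Xx; apply/(HXgen x) => T _ XT; exact: XT.
  case: (HS) => _ [HSsat [nSF _]].
  move Es: (filter X (iota 1 F)) => s.
  have Hpw : pairwise ltn s.
    rewrite -Es -sorted_pairwise; last exact: ltn_trans.
    apply: sorted_filter; [exact: ltn_trans | exact: iota_ltn_sorted].
  have mem_s : forall z, z \in s -> X z /\ 0 < z <= F.
    move=> z; rewrite -Es mem_filter mem_iota => /andP [Xz zi]; split => //; clear -zi; lia.
  have Hpos : all (fun x => 0 < x) s.
    by apply/allP => z /mem_s [_ /andP []].
  have Hsz : size s = p by rewrite -Es size_filter.
  have HP : forall t y r, s = t ++ y :: r -> t != [::] -> ~~ (gseq t %| y).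
    move=> t y r Est tne; apply/negP => Hty.
    have ys : y \in s by rewrite Est mem_cat mem_head orbT.
    have [Xy _] := mem_s y ys.
    have Hpw2 : pairwise ltn (t ++ y :: r) by rewrite -Est.
    apply: (Hmin (fun z => X z && (z != y))).
    + by move=> z /andP [].
    + by exists y; rewrite Xy eqxx.
    + move=> x; rewrite (HXgen x); split => H T HT YT.
      * apply: H => // z Xz; case: (eqVneq z y) => [->|zy]; last by apply: YT; rewrite Xz zy.
        case/lastP: t Est tne Hty Hpw2 => [//|t' w] Est _ Hty Hpw2.
        have wt : w \in rcons t' w by rewrite mem_rcons mem_head.
        have wy := pw_cat_lt Hpw2 wt.
        have ws : w \in s by rewrite Est mem_cat wt.
        have [Xw /andP [w0 _]] := mem_s w ws.
        have Tw : T w by apply: YT; rewrite Xw /= neq_ltn wy.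
        have Hpt : pairwise ltn (rcons t' w) by move: Hpw2; rewrite pairwise_cat => /and3P [].
        have Hd : dA T w %| gseq (rcons t' w).
          apply: dvd_gseq => e et.
          have es : e \in s by rewrite Est mem_cat et.
          have ey := pw_cat_lt Hpw2 et.
          have ew : e <= w by have := pw_last Hpt et; rewrite last_rcons.
          have [Xe _] := mem_s e es.
          by apply: dA_dvd => //; apply: YT; rewrite Xe /= neq_ltn ey.
        case: HT => _ [Tsat _].
        apply: (sat_stepL Tsat Tw w0 (ltnW wy)).
        apply: dvdn_sub; [exact: dvdn_trans Hd Hty | exact: dA_dvd Tw (leqnn w)].
      * by apply: H => // z /andP [Xz _]; apply: YT.
  have Hch := chain Hpw Hpos HP.
  rewrite Hsz in Hch.
  have sne : s != [::] by apply/eqP => E; move: p0; rewrite -Hsz E.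
  have xps : last 0 s \in s by case: (s) sne => // h s' _; exact: mem_last.
  have [Xxp /andP [xp0 xpF]] := mem_s _ xps.
  have Sxp := XS _ Xxp.
  have xpltF : last 0 s < F.
    rewrite ltn_neqAle xpF andbT; apply/eqP => E; by move: nSF; rewrite -E Sxp.
  have gxp : gseq s %| last 0 s by exact: gseq_dvd.
  have gpos : 0 < gseq s by case: (gseq s) gxp => //; rewrite dvd0n => /eqP E; move: xp0; rewrite E.
  have ngF : ~~ (gseq s %| F).
    apply/negP => gF.
    have Hd : dA S (last 0 s) %| gseq s.
      apply: dvd_gseq => e es; have [Xe _] := mem_s e es.
      by apply: dA_dvd; [exact: XS | exact: pw_last].
    have : S F.
      apply: (sat_stepL HSsat Sxp xp0 xpF).
      apply: dvdn_sub; [exact: dvdn_trans Hd gF | exact: dA_dvd Sxp (leqnn _)].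
    by rewrite (negbTE nSF).
  have ag : a <= gseq s.
    case: (leqP a (gseq s)) => // h; by move: ngF; rewrite Hb // gpos h.
  have h1 := leq_trans (leq_mul ag (leqnn (2 ^ p - 1))) Hch.
  exact: leq_ltn_trans h1 xpltF.
- move=> H.
  pose xx i := a * (2 ^ p - 2 ^ (p - i)).
  pose m := map xx (iota 1 p).
  pose X : pred nat := fun z => z \in m.
  have xx_lt : forall i j, i < j <= p -> xx i < xx j.
    move=> i j /andP [ij jp]; rewrite /xx ltn_pmul2l //.
    apply: sub_lt; first by rewrite ltn_exp2l //; clear -ij jp; lia.
    by rewrite leq_exp2l // leq_subr.
  have xx_pos : forall i, 0 < i <= p -> 0 < xx i.
    move=> i /andP [i0 ip]; rewrite /xx muln_gt0 a0 subn_gt0 ltn_exp2l //; clear -i0 ip; lia.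
  have xx_le : forall i, xx i <= a * (2 ^ p - 1).
    by move=> i; rewrite /xx leq_mul2l leq_sub2l ?orbT // expn_gt0.
  have Xi : forall z, X z -> exists2 i, 0 < i <= p & z = xx i.
    move=> z /mapP [i ii ->]; exists i => //; move: ii; rewrite mem_iota; clear; lia.
  have aX : forall z, X z -> a %| z by move=> z /Xi [i _ ->]; exact: dvdn_mulr.
  have Xb : forall z, X z -> 0 < z <= F.
    move=> z /Xi [i ip ->]; rewrite xx_pos //=; exact: leq_trans (xx_le i) (ltnW H).
  have HT0 := @Tdc_inSat a F a 0 (dvdnn a) naF.
  have XT0 : subset_nat X (Tdc a F a 0).
    by move=> z Xz; rewrite /Tdc (aX z Xz).
  exists (satgen F X); split; first exact: satgen_inSat HT0 XT0.
  exists X; split.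
  + split; first split.
    * split; first exact: Xb.
      by exists (Tdc a F a 0).
    * by move=> x; exact: satgenP.
    * move=> Y YX [x0 [Xx0 nYx0]] HY.
      case: (Xi _ Xx0) => j /andP [j0 jp] Ex0; subst x0.
      have Sx : satgen F X (xx j).
        by apply/satgenP => T _ XT; apply: XT.
      have HT := (HY (xx j)).1 Sx (Tdc a F (a * 2 ^ (p - j).+1) (xx j)).
      have : Tdc a F (a * 2 ^ (p - j).+1) (xx j) (xx j).
        apply: HT; first by apply: Tdc_inSat => //; exact: dvdn_mulr.
        move=> z Yz; have Xz := YX z Yz.
        case: (Xi _ Xz) => i /andP [i0 ip] Ez; subst z.
        have ij : i != j by apply: contraNneq nYx0 => <-.
        rewrite /Tdc; case: (ltngtP i j) ij => // hij _.
        - by rewrite D_dvd.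
        - by rewrite (aX _ Xz) xx_lt ?orbT //= hij.
      rewrite /Tdc /xx ltnn andbF orbF (negbTE (D_ndvd a0 j0 jp)) /=.
      by rewrite ltnNge (leq_trans (xx_le j) (ltnW H)).
  + rewrite /card_SatF_set -size_filter.
    transitivity (size m); last by rewrite size_map size_iota.
    apply: perm_size; apply: uniq_perm.
    * exact: filter_uniq (iota_uniq _ _).
    * rewrite map_inj_in_uniq ?iota_uniq //.
      move=> i j; rewrite !mem_iota => hi hj E.
      case: (ltngtP i j) => // h.
      - have jp : j <= p by clear -hj; lia.
        by have := xx_lt i j; rewrite E ltnn h jp => /(_ isT).
      - have ip : i <= p by clear -hi; lia.
        by have := xx_lt j i; rewrite E ltnn h ip => /(_ isT).
    * move=> z; rewrite mem_filter mem_iota; apply/andP/idP => [[]//|Xz].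
      split => //; have := Xb z Xz; clear; lia.
Qed.
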